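(* Assume GCH. Let $F:[\aleph_\omega]^\omega\to[[\aleph_\omega]^\omega]^\omega$ be any function. Then there is an enumeration $\{a_{\alpha,j}:\alpha<\aleph_{\omega+1},\ j<\omega_1\}$ of $[\aleph_\omega]^\omega$ without repetition such that for each $\alpha<\aleph_{\omega+1}$ and $j<\omega_1$: if $x\in[a_{\alpha,j}]^\omega$ then $F(x)\subseteq\{a_{\eta,i}:\eta\le\alpha,\ i<\omega_1\}$.
   Context: For a set $S$, $[S]^\omega$ denotes the family of countably infinite subsets of $S$. *)

(* Defs.v *)
From Stdlib Require Import List.

Definition pset (T : Type) := T -> Prop.
Definition full (T : Type) : pset T := fun _ => True.
Definition subset {T : Type} (X Y : pset T) := forall x, X x -> Y x.

Definition card_le {T U : Type} (X : pset T) (Y : pset U) :=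
  exists f : T -> U, (forall x, X x -> Y (f x)) /\
    (forall x y, X x -> X y -> f x = f y -> x = y).

Definition card_eq {T U : Type} (X : pset T) (Y : pset U) :=
  exists f : T -> U, (forall x, X x -> Y (f x)) /\
    (forall x y, X x -> X y -> f x = f y -> x = y) /\
    (forall y, Y y -> exists x, X x /\ f x = y).

Definition card_lt {T U : Type} (X : pset T) (Y : pset U) :=
  card_le X Y /\ ~ card_le Y X.

Definition countable {T : Type} (X : pset T) := card_le X (full nat).
Definition infinite {T : Type} (X : pset T) := card_le (full nat) X.
Definition ctbl_inf {T : Type} (X : pset T) := card_eq (full nat) X.

Definition ctbl_subsets {T : Type} (S : pset T) : pset (pset T) :=
  fun x => ctbl_inf x /\ subset x S.

(* Generalized continuum hypothesis: for every infinite T, every cardinal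
   between |T| and |P(T)| (represented by a family of subsets of T)
   equals one of the two. *)
Definition GCH : Prop :=
  forall (T : Type) (S : pset (pset T)),
    infinite (full T) -> card_le (full T) S ->
    card_eq S (full T) \/ card_eq S (full (pset T)).

Definition is_well_order {W : Type} (lt : W -> W -> Prop) :=
  (forall a, ~ lt a a) /\
  (forall a b c, lt a b -> lt b c -> lt a c) /\
  (forall a b, lt a b \/ a = b \/ lt b a) /\
  well_founded lt.

(* |A| = aleph_omega : A is uncountable, the infinite cardinals below |A|
   have no largest element, and below any cardinal < |A| there are only
   finitely many infinite cardinals. *)
Definition is_aleph_omega (A : Type) :=
  ~ countable (full A) /\
  (forall S : pset A, card_lt S (full A) ->
     exists S' : pset A, card_lt S S' /\ card_lt S' (full A)) /\
  (forall S : pset A, card_lt S (full A) ->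
     exists l : list (pset A), forall X, subset X S -> infinite X ->
       exists Y, In Y l /\ card_eq X Y).

Definition is_omega1 {O : Type} (lt : O -> O -> Prop) :=
  is_well_order lt /\ ~ countable (full O) /\
  (forall b, countable (fun a => lt a b)).

Definition is_succ_card_order {W : Type} (lt : W -> W -> Prop) (A : Type) :=
  is_well_order lt /\ ~ card_le (full W) (full A) /\
  (forall b, card_le (fun a => lt a b) (full A)).

(* Main.v *)
Require Import Defs.
From Stdlib Require Import Classical ClassicalEpsilon FunctionalExtensionality PropExtensionality List Lia Arith Wellfounded.


Definition seg {V : Type} (lt : V -> V -> Prop) (v : V) : pset V := fun u => lt u v.

Lemma card_le_refl {T} (X : pset T) : card_le X X.
Proof. exists (fun x => x); split; auto. Qed.

Lemma card_le_trans {T U V} (X : pset T) (Y : pset U) (Z : pset V) :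
  card_le X Y -> card_le Y Z -> card_le X Z.
Proof.
  intros [f [Hf1 Hf2]] [g [Hg1 Hg2]]. exists (fun x => g (f x)); split; auto.
Qed.

Lemma card_le_sub {T} (X Y : pset T) : subset X Y -> card_le X Y.
Proof. intros H; exists (fun x => x); split; auto. Qed.

Lemma card_le_mono {T U} (X X' : pset T) (Y Y' : pset U) :
  subset X' X -> subset Y Y' -> card_le X Y -> card_le X' Y'.
Proof. intros H1 H2 [f [Hf1 Hf2]]; exists f; split; auto. Qed.

Lemma card_le_onto {T U} (iT : inhabited T) (X : pset T) (Y : pset U) (f : T -> U) :
  (forall y, Y y -> exists x, X x /\ f x = y) -> card_le Y X.
Proof.
  intros H. exists (fun y => epsilon iT (fun x => X x /\ f x = y)). split.
  - intros y Hy. exact (proj1 (epsilon_spec iT _ (H y Hy))).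
  - intros y1 y2 H1 H2 E.
    pose proof (proj2 (epsilon_spec iT _ (H y1 H1))) as E1.
    pose proof (proj2 (epsilon_spec iT _ (H y2 H2))) as E2.
    rewrite <- E1, <- E2, E. reflexivity.
Qed.

Lemma card_eq_le {T U} (X : pset T) (Y : pset U) : card_eq X Y -> card_le X Y.
Proof. intros [f [H1 [H2 H3]]]; exists f; auto. Qed.

Lemma card_eq_ge {T U} (iT : inhabited T) (X : pset T) (Y : pset U) : card_eq X Y -> card_le Y X.
Proof. intros [f [H1 [H2 H3]]]. apply (card_le_onto iT X Y f H3). Qed.

Lemma not_inh_fun {T U} : ~ inhabited T -> { f : T -> U | True }.
Proof. intros H. exists (fun t => False_rect _ (H (inhabits t))). auto. Qed.

Section K1.
Context {V T : Type} (lt : V -> V -> Prop) (wf : well_founded lt)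
  (tri : forall a b, lt a b \/ a = b \/ lt b a) (iT : inhabited T).

Lemma K1 (D : pset V) (X : pset T) :
  card_le D X \/ exists v, D v /\ card_le X (fun u => D u /\ lt u v).
Proof.
  set (F := fun v (rec : forall u, lt u v -> T) =>
    epsilon iT (fun x => X x /\ forall u (h : lt u v), D u -> rec u h <> x)).
  set (f := Fix wf (fun _ => T) F).
  assert (Hf : forall v, f v = F v (fun u _ => f u)).
  { assert (ext : forall (x : V) (g h : forall y : V, lt y x -> T),
        (forall (y : V) (p : lt y x), g y p = h y p) -> F x g = F x h).
    { intros x g h Hgh.
      assert (g = h) as ->; [|reflexivity].
      apply functional_extensionality_dep; intros y.
      apply functional_extensionality_dep; intros p. apply Hgh. }
    intros v. exact (Fix_eq wf (fun _ => T) F ext v). }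
  assert (spec : forall v, (exists x, X x /\ forall u, lt u v -> D u -> f u <> x) ->
            X (f v) /\ forall u, lt u v -> D u -> f u <> f v).
  { intros v Hex. rewrite (Hf v). unfold F.
    apply (epsilon_spec _ (fun x => X x /\ forall u (h : lt u v), D u -> f u <> x)).
    destruct Hex as [x [Hx1 Hx2]]. exists x; split; auto. }
  destruct (classic (forall v, D v -> exists x, X x /\ forall u, lt u v -> D u -> f u <> x)) as [Hall|Hn].
  - left. exists f. split.
    + intros v Dv. apply (spec v (Hall v Dv)).
    + intros a b Da Db E. destruct (tri a b) as [h|[h|h]]; auto.
      * exfalso. apply (proj2 (spec b (Hall b Db)) a h Da E).
      * exfalso. apply (proj2 (spec a (Hall a Da)) b h Db (eq_sym E)).
  - right. apply not_all_ex_not in Hn. destruct Hn as [v Hv].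
    apply imply_to_and in Hv. destruct Hv as [Dv Hv].
    exists v; split; auto.
    apply (card_le_onto (inhabits v) _ _ f).
    intros y Hy. apply NNPP; intros C. apply Hv. exists y; split; auto.
    intros u Hu Du E. apply C. exists u; auto.
Qed.
End K1.

Lemma cantor {T} : ~ card_le (full (pset T)) (full T).
Proof.
  intros [g [_ Hg]].
  set (D := fun t => exists P, g P = t /\ ~ P t).
  assert (HD : D (g D) <-> ~ D (g D)).
  { split.
    - intros [P [E HP]]. assert (P = D) as -> by (apply Hg; unfold full; auto). exact HP.
    - intros H. exists D; auto. }
  tauto.
Qed.


Definition finite {T} (X : pset T) := exists l : list T, forall u, X u -> In u l.
Definition prodp {T U} (X : pset T) (Y : pset U) : pset (T * U) :=
  fun p => X (fst p) /\ Y (snd p).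

Lemma fin_not_inf {T} (X : pset T) : finite X -> ~ infinite X.
Proof.
  intros [l Hl] [f [Hf1 Hf2]].
  assert (ND : NoDup (map f (seq 0 (S (length l))))).
  { apply NoDup_map_NoDup_ForallPairs.
    - intros a b _ _ E. apply Hf2; unfold full; auto.
    - apply seq_NoDup. }
  assert (INC : incl (map f (seq 0 (S (length l)))) l).
  { intros y Hy. apply in_map_iff in Hy. destruct Hy as [k [<- _]]. apply Hl, Hf1. exact I. }
  pose proof (NoDup_incl_length ND INC) as HL.
  rewrite length_map, length_seq in HL. lia.
Qed.

Lemma fin_prod {T U} (X : pset T) (Y : pset U) : finite X -> finite Y -> finite (prodp X Y).
Proof.
  intros [l1 H1] [l2 H2]. exists (list_prod l1 l2). intros [a b] [Ha Hb].
  apply in_prod; auto.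
Qed.

Lemma inf_le {T U} (X : pset T) (Y : pset U) : card_le X Y -> infinite X -> infinite Y.
Proof. intros H1 H2. exact (card_le_trans _ _ _ H2 H1). Qed.

Lemma card_le_prod {T T' U U'} (X : pset T) (X' : pset T') (Y : pset U) (Y' : pset U') :
  card_le X X' -> card_le Y Y' -> card_le (prodp X Y) (prodp X' Y').
Proof.
  intros [f [Hf1 Hf2]] [g [Hg1 Hg2]].
  exists (fun p => (f (fst p), g (snd p))). split.
  - intros [a b] [Ha Hb]; split; simpl; auto.
  - intros [a b] [c d] [Ha Hb] [Hc Hd] E. simpl in *. injection E; intros E2 E1.
    f_equal; auto.
Qed.

Lemma dedekind {T} (X : pset T) (t : T) : infinite X -> card_le (fun u => X u \/ u = t) X.
Proof.
  intros Hinf. destruct (classic (X t)) as [Xt|nXt].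
  { apply card_le_sub. intros u [H| ->]; auto. }
  destruct Hinf as [e [He1 He2]].
  assert (einj : forall a b, e a = e b -> a = b) by (intros; apply He2; unfold full; auto).
  set (idx := fun u => epsilon (inhabits 0) (fun k => e k = u)).
  assert (Hidx : forall k, idx (e k) = k).
  { intros k. apply einj. unfold idx.
    exact (epsilon_spec (inhabits 0) (fun j => e j = e k) (ex_intro _ k eq_refl)). }
  set (h := fun u => if excluded_middle_informative (u = t) then e 0 else
            if excluded_middle_informative (exists k, e k = u) then e (S (idx u)) else u).
  exists h. split.
  - intros u Hu. unfold h.
    destruct (excluded_middle_informative (u = t)); [apply He1; exact I|].
    destruct (excluded_middle_informative (exists k, e k = u)); [apply He1; exact I|].
    destruct Hu; [auto| contradiction].
  - intros u v Hu Hv E. unfold h in E.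
    destruct (excluded_middle_informative (u = t)) as [Eu|Nu];
    destruct (excluded_middle_informative (v = t)) as [Ev|Nv]; try congruence.
    + destruct (excluded_middle_informative (exists k, e k = v)) as [[k <-]|Nk].
      * apply einj in E. discriminate.
      * exfalso. apply Nk. exists 0; auto.
    + destruct (excluded_middle_informative (exists k, e k = u)) as [[k <-]|Nk].
      * apply einj in E. discriminate.
      * exfalso. apply Nk. exists 0; auto.
    + destruct (excluded_middle_informative (exists k, e k = u)) as [[k <-]|Nk];
      destruct (excluded_middle_informative (exists k, e k = v)) as [[k' <-]|Nk'].
      * rewrite !Hidx in E. apply einj in E. congruence.
      * exfalso. apply Nk'. exists (S (idx (e k))). auto.
      * exfalso. apply Nk. exists (S (idx (e k'))). auto.
      * exact E.
Qed.

Definition lex2 {A B} (R : A -> A -> Prop) (S : B -> B -> Prop) (a b : A * B) :=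
  R (fst a) (fst b) \/ (fst a = fst b /\ S (snd a) (snd b)).

Lemma wf_lex2 {A B} (R : A -> A -> Prop) (S : B -> B -> Prop) :
  well_founded R -> well_founded S -> well_founded (lex2 R S).
Proof.
  intros wR wS [a b]. revert b. induction (wR a) as [a _ IHa]. intros b.
  induction (wS b) as [b _ IHb]. constructor. intros [a' b'] [H|[E H]]; simpl in *.
  - apply IHa; auto.
  - subst a'. apply IHb; auto.
Qed.

Section WO.
Context {V : Type} (lt : V -> V -> Prop) (wo : is_well_order lt).

Let irr : forall a, ~ lt a a := proj1 wo.
Let trans : forall a b c, lt a b -> lt b c -> lt a c := proj1 (proj2 wo).
Let tri : forall a b, lt a b \/ a = b \/ lt b a := proj1 (proj2 (proj2 wo)).
Let wf : well_founded lt := proj2 (proj2 (proj2 wo)).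

Definition lew (u m : V) := lt u m \/ u = m.

Lemma seg_dich (m : V) : infinite (seg lt m) \/ finite (seg lt m).
Proof.
  induction m as [m IH] using (well_founded_ind wf).
  destruct (classic (exists p, lt p m /\ forall q, ~ (lt p q /\ lt q m))) as [[p [Hp Hmax]]|Hn].
  - destruct (IH p Hp) as [Hi|[l Hl]].
    + left. apply (inf_le _ _ (card_le_sub _ _ (fun u (h : lt u p) => trans _ _ _ h Hp)) Hi).
    + right. exists (p :: l). intros u Hu. unfold seg in Hu.
      destruct (tri u p) as [h|[h|h]].
      * right. apply Hl. exact h.
      * left; auto.
      * exfalso. apply (Hmax u); auto.
  - destruct (classic (exists p, lt p m)) as [[p Hp]|Hn2].
    + left.
      assert (step : forall x, lt x m -> exists q, lt x q /\ lt q m).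
      { intros x Hx. apply NNPP; intros C. apply Hn. exists x; split; auto.
        intros q Hq. apply C. exists q; auto. }
      assert (iV : inhabited V) by exact (inhabits p).
      set (nxt := fun x => epsilon iV (fun q => lt x q /\ lt q m)).
      set (e := fix e n := match n with 0 => p | S n => nxt (e n) end).
      assert (He : forall n, lt (e n) m).
      { induction n; simpl; auto. exact (proj2 (epsilon_spec iV _ (step _ IHn))). }
      assert (Hinc : forall n, lt (e n) (e (S n))).
      { intros n. simpl. exact (proj1 (epsilon_spec iV _ (step _ (He n)))). }
      assert (Hmono : forall n k, n < k -> lt (e n) (e k)).
      { intros n k Hk. induction Hk; auto. apply (trans _ _ _ IHHk (Hinc m0)). }
      exists e. split; [intros n _; apply He|].
      intros a b _ _ E. destruct (Nat.lt_trichotomy a b) as [h|[h|h]]; auto.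
      * exfalso. pose proof (Hmono _ _ h) as Hl. rewrite E in Hl. apply (irr _ Hl).
      * exfalso. pose proof (Hmono _ _ h) as Hl. rewrite E in Hl. apply (irr _ Hl).
    + right. exists nil. intros u Hu. exfalso. apply Hn2. exists u; auto.
Qed.

Definition mx (x y : V) : V := if excluded_middle_informative (lt x y) then y else x.

Lemma mx_ge1 x y : lew x (mx x y).
Proof. unfold mx, lew. destruct (excluded_middle_informative (lt x y)); auto. Qed.
Lemma mx_ge2 x y : lew y (mx x y).
Proof.
  unfold mx, lew. destruct (excluded_middle_informative (lt x y)); auto.
  destruct (tri x y) as [h|[h|h]]; auto. contradiction.
Qed.
Lemma mx_cases x y : mx x y = x \/ mx x y = y.
Proof. unfold mx. destruct (excluded_middle_informative (lt x y)); auto. Qed.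

Lemma lew_trans a b c : lew a b -> lew b c -> lew a c.
Proof.
  unfold lew. intros [h1|h1] [h2|h2]; subst; auto. left; eauto.
Qed.

Definition gkey (p : V * V) : V * (V * V) := (mx (fst p) (snd p), p).
Definition godel (p q : V * V) : Prop := lex2 lt (lex2 lt lt) (gkey p) (gkey q).

Lemma godel_wf : well_founded godel.
Proof. unfold godel. apply wf_inverse_image. apply wf_lex2; auto. apply wf_lex2; auto. Qed.

Lemma godel_tri : forall a b, godel a b \/ a = b \/ godel b a.
Proof.
  intros [a1 a2] [b1 b2]. unfold godel, lex2, gkey; simpl.
  destruct (tri (mx a1 a2) (mx b1 b2)) as [h|[h|h]]; [left; left; exact h| |right; right; left; exact h].
  destruct (tri a1 b1) as [h1|[h1|h1]];
    [left; right; split; [exact h|left; exact h1]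
    | subst b1
    | right; right; right; split; [symmetry; exact h| left; exact h1]].
  destruct (tri a2 b2) as [h2|[h2|h2]];
    [left; right; split; [exact h|right; split; auto]
    | subst; right; left; reflexivity
    | right; right; right; split; [symmetry; exact h| right; split; auto]].
Qed.

Lemma godel_below p q : godel q p -> lew (fst q) (mx (fst p) (snd p)) /\ lew (snd q) (mx (fst p) (snd p)).
Proof.
  intros H. assert (Hm : lew (mx (fst q) (snd q)) (mx (fst p) (snd p))).
  { destruct H as [H|[H _]]; unfold lew; simpl in *; auto. }
  split; eapply lew_trans; [apply mx_ge1|exact Hm|apply mx_ge2|exact Hm].
Qed.

Theorem hessenberg (b : V) : infinite (seg lt b) -> card_le (prodp (seg lt b) (seg lt b)) (seg lt b).
Proof.
  induction b as [b IH] using (well_founded_ind wf). intros Hinf.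
  destruct (classic (exists g, lt g b /\ card_le (seg lt b) (seg lt g))) as [[g [Hg Hc]]|HB].
  - pose proof (inf_le _ _ Hc Hinf) as Hinfg.
    eapply card_le_trans; [apply (card_le_prod _ _ _ _ Hc Hc)|].
    eapply card_le_trans; [apply (IH g Hg Hinfg)|].
    apply card_le_sub. intros u Hu. exact (trans _ _ _ Hu Hg).
  - assert (iV : inhabited V) by (destruct Hinf as [e _]; exact (inhabits (e 0))).
    destruct (K1 godel godel_wf godel_tri iV (prodp (seg lt b) (seg lt b)) (seg lt b)) as [H|[p [Dp Hp]]];
      [exact H|exfalso].
    set (m := mx (fst p) (snd p)).
    assert (Hmb : lt m b).
    { unfold m. destruct Dp as [D1 D2]. destruct (mx_cases (fst p) (snd p)) as [E|E]; rewrite E; auto. }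
    set (Dm := fun u => lt u m \/ u = m).
    assert (Hsub : card_le (seg lt b) (prodp Dm Dm)).
    { eapply card_le_trans; [exact Hp|]. apply card_le_sub. intros q [_ Hq].
      destruct (godel_below p q Hq). split; auto. }
    destruct (seg_dich m) as [Hi|Hf].
    + apply HB. exists m. split; auto.
      eapply card_le_trans; [exact Hsub|].
      eapply card_le_trans; [apply (card_le_prod _ _ _ _ (dedekind (seg lt m) m Hi) (dedekind (seg lt m) m Hi))|].
      apply (IH m Hmb Hi).
    + assert (Hfm : finite Dm).
      { destruct Hf as [l Hl]. exists (m :: l). intros u [h|h]; [right; apply Hl; exact h|left; auto]. }
      apply (fin_not_inf _ (fin_prod _ _ Hfm Hfm)). exact (inf_le _ _ Hsub Hinf).
Qed.

End WO.


Lemma K1full {V T B} (lt : V -> V -> Prop) (wf : well_founded lt)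
  (tri : forall a b, lt a b \/ a = b \/ lt b a) (iT : inhabited T) (Y : pset B)
  (sb : forall v, card_le (seg lt v) Y) (X : pset T) :
  card_le (full V) X \/ card_le X Y.
Proof.
  destruct (K1 lt wf tri iT (full V) X) as [H|[v [_ Hv]]]; [left; exact H|right].
  eapply card_le_trans; [exact Hv|]. eapply card_le_trans; [|exact (sb v)].
  apply card_le_sub. intros u [_ h]; exact h.
Qed.

Lemma nat_tri : forall a b : nat, a < b \/ a = b \/ b < a.
Proof. intros; lia. Qed.

Lemma nat_seg_le (n : nat) : card_le (seg lt n) (full nat).
Proof. exists (fun k => k); split; unfold full; auto. Qed.

Lemma inf_of_not_ctbl {T} (X : pset T) (iT : inhabited T) : ~ countable X -> infinite X.
Proof.
  intros H. destruct (K1full lt lt_wf nat_tri iT (full nat) nat_seg_le X) as [h|h]; auto.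
  contradiction.
Qed.

Lemma gch_apply (hGCH : GCH) {T V} (h : V -> pset T)
  (hinj : forall a b, h a = h b -> a = b) (iV : inhabited V)
  (TV : card_le (full T) (full V)) (nVT : ~ card_le (full V) (full T))
  (Tinf : infinite (full T)) : card_le (full (pset T)) (full V).
Proof.
  set (S := fun P => exists v, h v = P).
  assert (TS : card_le (full T) S).
  { destruct TV as [f [_ Hf]]. exists (fun t => h (f t)). split.
    - intros t _. exists (f t); auto.
    - intros a b Ha Hb E. apply Hf; auto. }
  assert (VS : card_le (full V) S).
  { exists h. split; [intros v _; exists v; auto|intros a b _ _ E; auto]. }
  destruct (hGCH T S Tinf TS) as [H|H].
  - exfalso. apply nVT. eapply card_le_trans; [exact VS|]. apply card_eq_le; exact H.
  - eapply card_le_trans; [apply (card_eq_ge (inhabits (fun _ => True)) _ _ H)|].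
    apply (card_le_onto iV (full V) S h). intros P [v Hv]. exists v; split; auto. exact I.
Qed.

Definition bigU {J T} (I : pset J) (X : J -> pset T) : pset T := fun z => exists y, I y /\ X y z.

Lemma union_le {J T B C} (iJ : inhabited J) (iB : inhabited B) (iC : inhabited C)
  (Ix : pset J) (X : J -> pset T) :
  card_le Ix (full B) -> (forall y, Ix y -> card_le (X y) (full C)) ->
  card_le (bigU Ix X) (full (B * C)).
Proof.
  intros [f [_ Hf]] HX.
  assert (iF : inhabited (T -> C)) by (destruct iC as [c]; exact (inhabits (fun _ => c))).
  set (cd := fun y => epsilon iF (fun g => (forall x, X y x -> full C (g x)) /\
                 forall a b, X y a -> X y b -> g a = g b -> a = b)).
  assert (Hcd : forall y, Ix y -> forall a b, X y a -> X y b -> cd y a = cd y b -> a = b).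
  { intros y Hy. exact (proj2 (epsilon_spec iF _ (HX y Hy))). }
  set (ix := fun z => epsilon iJ (fun y => Ix y /\ X y z)).
  assert (Hix : forall z, bigU Ix X z -> Ix (ix z) /\ X (ix z) z).
  { intros z Hz. exact (epsilon_spec iJ _ Hz). }
  exists (fun z => (f (ix z), cd (ix z) z)). split; [intros; exact I|].
  intros a b Ha Hb E. injection E; intros E2 E1.
  destruct (Hix a Ha) as [Ia Xa]. destruct (Hix b Hb) as [Ib Xb].
  apply Hf in E1; auto. rewrite <- E1 in E2, Xb.
  exact (Hcd _ Ia a b Xa Xb E2).
Qed.

Lemma sb {T U} (iU : inhabited U) (X : pset T) (Y : pset U) :
  card_le X Y -> card_le Y X -> card_eq X Y.
Proof.
  intros [f [Hf1 Hf2]] [g [Hg1 Hg2]].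
  set (Cn := fix Cn n : pset T := match n with
     | 0 => fun x => X x /\ ~ exists y, Y y /\ g y = x
     | S n => fun x => exists x', Cn n x' /\ g (f x') = x end).
  assert (CX : forall n x, Cn n x -> X x).
  { induction n; simpl; intros x H. - apply H. - destruct H as [x' [H1 <-]]. apply Hg1, Hf1, IHn, H1. }
  set (C := fun x => exists n, Cn n x).
  set (gi := fun x => epsilon iU (fun y => Y y /\ g y = x)).
  set (h := fun x => if excluded_middle_informative (C x) then f x else gi x).
  assert (Hgi : forall x, X x -> ~ C x -> Y (gi x) /\ g (gi x) = x).
  { intros x Hx HC. apply (epsilon_spec iU (fun y => Y y /\ g y = x)).
    apply NNPP; intros N. apply HC. exists 0. simpl. split; auto. }
  exists h. split; [|split].
  - intros x Hx. unfold h. destruct (excluded_middle_informative (C x)) as [c|c].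
    + apply Hf1, Hx.
    + apply (Hgi x Hx c).
  - intros a b Ha Hb E. unfold h in E.
    destruct (excluded_middle_informative (C a)) as [ca|ca];
    destruct (excluded_middle_informative (C b)) as [cb|cb].
    + apply Hf2; auto.
    + exfalso. destruct ca as [n Hn]. apply cb. exists (S n). simpl. exists a. split; auto.
      rewrite E. apply (Hgi b Hb cb).
    + exfalso. destruct cb as [n Hn]. apply ca. exists (S n). simpl. exists b. split; auto.
      rewrite <- E. apply (Hgi a Ha ca).
    + rewrite <- (proj2 (Hgi a Ha ca)), <- (proj2 (Hgi b Hb cb)), E. reflexivity.
  - intros y Hy. destruct (classic (C (g y))) as [c|c].
    + destruct c as [[|n] Hn]; simpl in Hn.
      * exfalso. apply (proj2 Hn). exists y; auto.
      * destruct Hn as [x [Hx E]]. exists x. split; [apply (CX n x Hx)|].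
        unfold h. destruct (excluded_middle_informative (C x)) as [cx|cx].
        -- apply Hg2; auto. apply Hf1, (CX n x Hx).
        -- exfalso. apply cx. exists n; auto.
    + exists (g y). split; [apply Hg1, Hy|]. unfold h.
      destruct (excluded_middle_informative (C (g y))) as [cx|cx]; [contradiction|].
      destruct (Hgi (g y) (Hg1 y Hy) cx) as [H1 H2]. apply Hg2; auto.
Qed.

Lemma pset_ext {T} (P Q : pset T) : (forall x, P x <-> Q x) -> P = Q.
Proof. intros H. apply functional_extensionality; intros x. apply propositional_extensionality, H. Qed.



Definition pn_code (p : pset nat * pset nat) : pset nat :=
  fun n => exists k, (n = 2 * k /\ fst p k) \/ (n = S (2 * k) /\ snd p k).

Lemma pn_pair : card_le (full (pset nat * pset nat)) (full (pset nat)).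
Proof.
  exists pn_code. split; [intros; exact I|].
  intros [P Q] [P' Q'] _ _ E.
  assert (H : forall n, pn_code (P, Q) n <-> pn_code (P', Q') n) by (intros n; rewrite E; tauto).
  f_equal; apply pset_ext; intros k.
  - specialize (H (2 * k)). unfold pn_code in H; simpl in H. split; intros Hk.
    + destruct (proj1 H (ex_intro _ k (or_introl (conj eq_refl Hk)))) as [j [[E1 H1]|[E1 H1]]]; [|lia].
      assert (j = k) by lia. subst; auto.
    + destruct (proj2 H (ex_intro _ k (or_introl (conj eq_refl Hk)))) as [j [[E1 H1]|[E1 H1]]]; [|lia].
      assert (j = k) by lia. subst; auto.
  - specialize (H (S (2 * k))). unfold pn_code in H; simpl in H. split; intros Hk.
    + destruct (proj1 H (ex_intro _ k (or_intror (conj eq_refl Hk)))) as [j [[E1 H1]|[E1 H1]]]; [lia|].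
      assert (j = k) by lia. subst; auto.
    + destruct (proj2 H (ex_intro _ k (or_intror (conj eq_refl Hk)))) as [j [[E1 H1]|[E1 H1]]]; [lia|].
      assert (j = k) by lia. subst; auto.
Qed.

Lemma nat_pn : card_le (full nat) (full (pset nat)).
Proof.
  exists (fun n => fun k => k = n). split; [intros; exact I|].
  intros a b _ _ E. assert (H : (fun k => k = a) a) by reflexivity. rewrite E in H. exact H.
Qed.

Lemma union_le_gen {J T B C} (iJ : inhabited J) (iC : inhabited C)
  (Ix : pset J) (Bs : pset B) (X : J -> pset T) :
  card_le Ix Bs -> (forall y, Ix y -> card_le (X y) (full C)) ->
  card_le (bigU Ix X) (prodp Bs (full C)).
Proof.
  intros [f [Hf0 Hf]] HX.
  assert (iF : inhabited (T -> C)) by (destruct iC as [c]; exact (inhabits (fun _ => c))).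
  set (cd := fun y => epsilon iF (fun g => (forall x, X y x -> full C (g x)) /\
                 forall a b, X y a -> X y b -> g a = g b -> a = b)).
  assert (Hcd : forall y, Ix y -> forall a b, X y a -> X y b -> cd y a = cd y b -> a = b).
  { intros y Hy. exact (proj2 (epsilon_spec iF _ (HX y Hy))). }
  set (ix := fun z => epsilon iJ (fun y => Ix y /\ X y z)).
  assert (Hix : forall z, bigU Ix X z -> Ix (ix z) /\ X (ix z) z).
  { intros z Hz. exact (epsilon_spec iJ _ Hz). }
  exists (fun z => (f (ix z), cd (ix z) z)). split.
  { intros z Hz. split; [apply Hf0, (Hix z Hz)|exact I]. }
  intros a b Ha Hb E. injection E; intros E2 E1.
  destruct (Hix a Ha) as [Ia Xa]. destruct (Hix b Hb) as [Ib Xb].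
  apply Hf in E1; auto. rewrite <- E1 in E2, Xb.
  exact (Hcd _ Ia a b Xa Xb E2).
Qed.

Lemma wf_min {T} (R : T -> T -> Prop) (wf : well_founded R) (P : pset T) x :
  P x -> exists m, P m /\ forall y, R y m -> ~ P y.
Proof.
  induction x as [x IH] using (well_founded_ind wf). intros Px.
  destruct (classic (exists y, R y x /\ P y)) as [[y [Ry Py]]|N].
  - exact (IH y Ry Py).
  - exists x. split; auto. intros y Ry Py. apply N; eauto.
Qed.

Lemma list_cover {T Sy} (P : pset T) (Ss : pset Sy) (s0 : Sy) (Hs0 : Ss s0) (L : list T) :
  card_le P (prodp Ss (full nat)) -> card_le (fun z => P z \/ In z L) (prodp Ss (full nat)).
Proof.
  intros [f [Hf0 Hf]].
  set (pos := fun z => epsilon (inhabits 0) (fun k => nth_error L k = Some z)).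
  assert (Hpos : forall z, In z L -> nth_error L (pos z) = Some z).
  { intros z Hz. apply (epsilon_spec (inhabits 0) (fun k => nth_error L k = Some z)).
    apply In_nth_error; auto. }
  set (h := fun z => if excluded_middle_informative (P z) then (fst (f z), 2 * snd (f z))
                     else (s0, S (2 * pos z))).
  exists h. split.
  - intros z Hz. unfold h. destruct (excluded_middle_informative (P z)) as [p|p].
    + split; [apply (Hf0 z p)|exact I].
    + split; [exact Hs0|exact I].
  - intros a b Ha Hb E. unfold h in E.
    destruct (excluded_middle_informative (P a)) as [pa|pa];
    destruct (excluded_middle_informative (P b)) as [pb|pb]; apply pair_equal_spec in E; destruct E as [E1 E2].
    + apply Hf; auto. destruct (f a), (f b); simpl in *. f_equal; auto; lia.
    + lia.
    + lia.
    + destruct Ha as [Ha|Ha]; [contradiction|]. destruct Hb as [Hb|Hb]; [contradiction|].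
      assert (pos a = pos b) by lia. pose proof (Hpos a Ha). pose proof (Hpos b Hb). congruence.
Qed.


Lemma full_prod {T U} : subset (full (T * U)) (prodp (full T) (full U)).
Proof. intros p _; split; exact I. Qed.
Lemma prod_full {T U} : subset (prodp (full T) (full U)) (full (T * U)).
Proof. intros p _; exact I. Qed.

Lemma inh_of_not_le {T U} (Y : pset U) : ~ card_le (full T) Y -> inhabited T.
Proof.
  intros H. apply NNPP; intros N. apply H. destruct (not_inh_fun (U:=U) N) as [f _].
  exists f. split; intros x; exfalso; apply N; exact (inhabits x).
Qed.

Section Ctx.
Context (hGCH : GCH) (A : Type) (hA : is_aleph_omega A)
  (W : Type) (ltW : W -> W -> Prop) (hW : is_succ_card_order ltW A)
  (O : Type) (ltO : O -> O -> Prop) (hO : is_omega1 ltO).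

Lemma iA : inhabited A.
Proof. exact (inh_of_not_le _ (proj1 hA)). Qed.
Lemma iO : inhabited O.
Proof. exact (inh_of_not_le _ (proj1 (proj2 hO))). Qed.
Lemma iW : inhabited W.
Proof. exact (inh_of_not_le _ (proj1 (proj2 hW))). Qed.

Lemma nat_A : infinite (full A).
Proof. apply inf_of_not_ctbl; [exact iA|exact (proj1 hA)]. Qed.
Lemma nat_O : infinite (full O).
Proof. apply inf_of_not_ctbl; [exact iO|exact (proj1 (proj2 hO))]. Qed.

Lemma wW_tri : forall a b, ltW a b \/ a = b \/ ltW b a.
Proof. exact (proj1 (proj2 (proj2 (proj1 hW)))). Qed.
Lemma wW_wf : well_founded ltW.
Proof. exact (proj2 (proj2 (proj2 (proj1 hW)))). Qed.
Lemma wO_tri : forall a b, ltO a b \/ a = b \/ ltO b a.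
Proof. exact (proj1 (proj2 (proj2 (proj1 hO)))). Qed.
Lemma wO_wf : well_founded ltO.
Proof. exact (proj2 (proj2 (proj2 (proj1 hO)))). Qed.

Lemma A_seg : exists k, card_le (full A) (seg ltW k).
Proof.
  destruct (K1 ltW wW_wf wW_tri iA (full W) (full A)) as [H|[v [_ Hv]]].
  - exfalso. exact (proj1 (proj2 hW) H).
  - exists v. eapply card_le_trans; [exact Hv|]. apply card_le_sub. intros u [_ h]; exact h.
Qed.

Lemma W_PA : card_le (full W) (full (pset A)).
Proof.
  destruct (K1full ltW wW_wf wW_tri (inhabits (fun _ : A => True)) (full A) (proj2 (proj2 hW)) (full (pset A))) as [H|H]; auto.
  exfalso. exact (cantor H).
Qed.

Lemma PA_W : card_le (full (pset A)) (full W).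
Proof.
  destruct W_PA as [h [_ hi]].
  apply (gch_apply hGCH h (fun a b => hi a b I I) iW).
  - destruct A_seg as [k Hk]. eapply card_le_trans; [exact Hk|]. apply card_le_sub; intros u _; exact I.
  - exact (proj1 (proj2 hW)).
  - exact nat_A.
Qed.

Lemma O_PN : card_le (full O) (full (pset nat)).
Proof.
  destruct (K1full ltO wO_wf wO_tri (inhabits (fun _ : nat => True)) (full nat) (proj2 (proj2 hO)) (full (pset nat))) as [H|H]; auto.
  exfalso. exact (cantor H).
Qed.

Lemma PN_O : card_le (full (pset nat)) (full O).
Proof.
  destruct O_PN as [h [_ hi]].
  apply (gch_apply hGCH h (fun a b => hi a b I I) iO).
  - exact nat_O.
  - exact (proj1 (proj2 hO)).
  - exists (fun n => n); split; auto.
Qed.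

Lemma O_A : card_le (full O) (full A).
Proof.
  destruct (K1full ltO wO_wf wO_tri iA (full nat) (proj2 (proj2 hO)) (full A)) as [H|H]; auto.
  exfalso. exact (proj1 hA H).
Qed.

Lemma A_A : card_le (full (A * A)) (full A).
Proof.
  destruct A_seg as [k Hk].
  assert (Hinf : infinite (seg ltW k)) by exact (inf_le _ _ Hk nat_A).
  eapply card_le_trans; [apply card_le_sub, full_prod|].
  eapply card_le_trans; [apply (card_le_prod _ _ _ _ Hk Hk)|].
  eapply card_le_trans; [apply (hessenberg ltW (proj1 hW) k Hinf)|].
  apply (proj2 (proj2 hW)).
Qed.

Lemma O_O : card_le (full (O * O)) (full O).
Proof.
  eapply card_le_trans; [apply card_le_sub, full_prod|].
  eapply card_le_trans; [apply (card_le_prod _ _ _ _ O_PN O_PN)|].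
  eapply card_le_trans; [apply card_le_sub, prod_full|].
  eapply card_le_trans; [apply pn_pair|]. exact PN_O.
Qed.

Lemma nat_O_O : card_le (full (nat * O)) (full O).
Proof.
  eapply card_le_trans; [apply card_le_sub, full_prod|].
  eapply card_le_trans; [apply (card_le_prod _ _ _ _ nat_O (card_le_refl (full O)))|].
  eapply card_le_trans; [apply card_le_sub, prod_full|]. exact O_O.
Qed.

Lemma O_nat_O : card_le (full (O * nat)) (full O).
Proof.
  eapply card_le_trans; [apply card_le_sub, full_prod|].
  eapply card_le_trans; [apply (card_le_prod _ _ _ _ (card_le_refl (full O)) nat_O)|].
  eapply card_le_trans; [apply card_le_sub, prod_full|]. exact O_O.
Qed.

Lemma A_O_A : card_le (full (A * O)) (full A).
Proof.
  eapply card_le_trans; [apply card_le_sub, full_prod|].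
  eapply card_le_trans; [apply (card_le_prod _ _ _ _ (card_le_refl (full A)) O_A)|].
  eapply card_le_trans; [apply card_le_sub, prod_full|]. exact A_A.
Qed.

Definition Eset : pset (pset A) := ctbl_subsets (full A).

Lemma ctbl_le_nat (x : pset A) : ctbl_inf x -> card_le x (full nat).
Proof. intros H. exact (card_eq_ge (inhabits 0) _ _ H). Qed.

Section Konig.
Variable kap : W.
Hypothesis kap_A : card_le (full A) (seg ltW kap).
Hypothesis kap_min : forall d, ltW d kap -> ~ card_le (full A) (seg ltW d).

Let psi_ex := proj2 (proj2 hW) kap.

Definition psi : W -> A := epsilon (inhabits (fun _ : W => epsilon iA (fun _ => True)))
   (fun f => (forall x, seg ltW kap x -> full A (f x)) /\
             (forall x y, seg ltW kap x -> seg ltW kap y -> f x = f y -> x = y)).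
Lemma psi_inj : forall x y, ltW x kap -> ltW y kap -> psi x = psi y -> x = y.
Proof. exact (proj2 (epsilon_spec _ _ psi_ex)). Qed.

Definition img (d : W) : pset A := fun a => exists u, ltW u d /\ psi u = a.

Lemma trW : forall a b c, ltW a b -> ltW b c -> ltW a c.
Proof. exact (proj1 (proj2 (proj1 hW))). Qed.
Lemma irW : forall a, ~ ltW a a.
Proof. exact (proj1 (proj1 hW)). Qed.

Lemma seg_img (d : W) : ltW d kap -> card_le (seg ltW d) (img d).
Proof.
  intros Hd. exists psi. split.
  - intros u Hu. exists u; auto.
  - intros x y Hx Hy E. apply psi_inj; auto; eapply trW; eauto.
Qed.

Lemma img_seg (d : W) : card_le (img d) (seg ltW d).
Proof.
  apply (card_le_onto iW (seg ltW d) (img d) psi). intros a [u [Hu E]]. exists u; auto.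
Qed.

Lemma img_lt (d : W) : ltW d kap -> card_lt (img d) (full A).
Proof.
  intros Hd. split.
  - apply card_le_sub. intros a _; exact I.
  - intros H. apply (kap_min d Hd). eapply card_le_trans; [exact H|apply img_seg].
Qed.

Lemma sub_seg_le (d d' : W) : ltW d' d \/ d' = d -> card_le (seg ltW d') (seg ltW d).
Proof. intros [H| ->]; [|apply card_le_refl]. apply card_le_sub. intros u Hu; eapply trW; eauto. Qed.

Lemma le_of_not_card (d d' : W) : ~ card_le (seg ltW d') (seg ltW d) -> ltW d d'.
Proof.
  intros H. destruct (wW_tri d d') as [h|[h|h]]; auto; exfalso; apply H; apply sub_seg_le; auto.
Qed.

Lemma UP (d : W) : ltW d kap -> exists d', ltW d' kap /\ ~ card_le (seg ltW d') (seg ltW d).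
Proof.
  intros Hd. destruct (proj1 (proj2 hA) (img d) (img_lt d Hd)) as [S' [[H1 H2] [H3 H4]]].
  destruct (K1 ltW wW_wf wW_tri iA (seg ltW kap) S') as [H|[d' [Hd' Hc]]].
  - exfalso. apply H4. eapply card_le_trans; [exact kap_A|exact H].
  - exists d'. split; auto. intros C. apply H2.
    eapply card_le_trans; [exact Hc|].
    eapply card_le_trans; [apply card_le_sub; intros u [_ h]; exact h|].
    eapply card_le_trans; [exact C|]. apply seg_img; auto.
Qed.

Lemma g0_ex : exists g0, ltW g0 kap /\ infinite (seg ltW g0).
Proof.
  destruct (K1 ltW wW_wf wW_tri (inhabits 0) (seg ltW kap) (full nat)) as [H|[d [Hd Hc]]].
  - exfalso. apply (proj1 hA). eapply card_le_trans; [exact kap_A|exact H].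
  - exists d. split; auto. eapply card_le_trans; [exact Hc|]. apply card_le_sub; intros u [_ h]; exact h.
Qed.

Definition g0 := epsilon iW (fun g => ltW g kap /\ infinite (seg ltW g)).
Lemma g0_spec : ltW g0 kap /\ infinite (seg ltW g0).
Proof. exact (epsilon_spec iW _ g0_ex). Qed.

Definition nextg (d : W) := epsilon iW (fun d' => ltW d' kap /\ ~ card_le (seg ltW d') (seg ltW d)).
Fixpoint gam (n : nat) : W := match n with 0 => g0 | S n => nextg (gam n) end.

Lemma gam_spec n : ltW (gam n) kap /\ ~ card_le (seg ltW (gam (S n))) (seg ltW (gam n)).
Proof.
  induction n.
  - split; [apply g0_spec|]. exact (proj2 (epsilon_spec iW _ (UP _ (proj1 g0_spec)))).
  - split; [exact (proj1 (epsilon_spec iW _ (UP _ (proj1 IHn))))|].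
    assert (H : ltW (gam (S n)) kap) by exact (proj1 (epsilon_spec iW _ (UP _ (proj1 IHn)))).
    exact (proj2 (epsilon_spec iW _ (UP _ H))).
Qed.

Lemma gam_mono n m : n < m -> ltW (gam n) (gam m).
Proof.
  intros H. induction H.
  - apply le_of_not_card. apply (proj2 (gam_spec n)).
  - eapply trW; [exact IHle|]. apply le_of_not_card. apply (proj2 (gam_spec m)).
Qed.

Lemma gam_inf n : infinite (seg ltW (gam n)).
Proof.
  destruct n; [apply g0_spec|]. eapply inf_le; [|apply g0_spec].
  apply sub_seg_le. left. apply (gam_mono 0). lia.
Qed.

Lemma pigeon (len : nat) (f : nat -> nat) : (forall n, f n < len) ->
  exists a b, a < b /\ f a = f b.
Proof.
  intros Hf. apply NNPP; intros N.
  assert (Hfin : finite (fun i => i < len)).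
  { exists (seq 0 len). intros u Hu. apply in_seq. lia. }
  apply (fin_not_inf _ Hfin). exists f. split; [intros n _; apply Hf|].
  intros a b _ _ E. destruct (Nat.lt_trichotomy a b) as [h|[h|h]]; auto; exfalso; apply N; eauto.
Qed.

Lemma cofinal d : ltW d kap -> exists n, ltW d (gam n).
Proof.
  intros Hd. apply NNPP; intros N.
  assert (Hle : forall n, ltW (gam n) d \/ gam n = d).
  { intros n. destruct (wW_tri (gam n) d) as [h|[h|h]]; auto. exfalso; apply N; eauto. }
  destruct (UP d Hd) as [d' [Hd' Hnc]].
  pose proof (le_of_not_card _ _ Hnc) as Hdd'.
  assert (Hg : forall n, ltW (gam n) d').
  { intros n. destruct (Hle n) as [h|h]; [eapply trW; eauto|rewrite h; auto]. }
  destruct (proj2 (proj2 hA) (img d') (img_lt d' Hd')) as [l Hl].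
  assert (HX : forall n, exists Y, In Y l /\ card_eq (img (gam n)) Y).
  { intros n. apply Hl.
    - intros a [u [Hu E]]. exists u; split; auto. eapply trW; eauto.
    - eapply inf_le; [apply seg_img; apply gam_spec|apply gam_inf]. }
  set (dflt := fun _ : A => True).
  set (ix := fun n => epsilon (inhabits 0) (fun i => i < length l /\ card_eq (img (gam n)) (nth i l dflt))).
  assert (Hix : forall n, ix n < length l /\ card_eq (img (gam n)) (nth (ix n) l dflt)).
  { intros n. apply (epsilon_spec (inhabits 0) (fun i => i < length l /\ card_eq (img (gam n)) (nth i l dflt))).
    destruct (HX n) as [Y [HY HE]]. destruct (In_nth l Y dflt HY) as [i [Hi E]].
    exists i. rewrite E. auto. }
  destruct (pigeon (length l) ix (fun n => proj1 (Hix n))) as [a [b [Hab E]]].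
  pose proof (proj2 (Hix a)) as Ea. pose proof (proj2 (Hix b)) as Eb. rewrite <- E in Eb.
  apply (proj2 (gam_spec a)).
  eapply card_le_trans; [apply (sub_seg_le (gam b))|].
  { destruct (Nat.eq_dec (S a) b) as [h|h]; [right; rewrite h; auto|left; apply gam_mono; lia]. }
  eapply card_le_trans; [apply seg_img; apply gam_spec|].
  eapply card_le_trans; [apply card_eq_le; exact Eb|].
  eapply card_le_trans; [apply (card_eq_ge iA _ _ Ea)|].
  apply img_seg.
Qed.

Lemma konig_k : ~ card_le Eset (full A).
Proof.
  intros [g [_ Hg]]. destruct kap_A as [io [Hio Hioi]].
  set (Ix := fun n (x : pset A) => Eset x /\ ltW (io (g x)) (gam n)).
  set (U := fun n => bigU (Ix n) (fun x => x)).
  assert (Hcov : forall n L, exists z, ~ U n z /\ ~ In z L).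
  { intros n L. apply NNPP; intros N.
    assert (Hall : forall z, U n z \/ In z L).
    { intros z. apply NNPP; intros C. apply N. exists z. tauto. }
    apply (kap_min (gam n) (proj1 (gam_spec n))).
    destruct (gam_inf n) as [e [He _]].
    eapply card_le_trans; [apply (card_le_sub (full A) (fun z => U n z \/ In z L)); intros z _; apply Hall|].
    eapply card_le_trans; [apply (list_cover _ _ (e 0) (He 0 I))|].
    - apply union_le_gen; [exact (inhabits (fun _ => True))|exact (inhabits 0)| |].
      + exists (fun x => io (g x)). split; [intros x [_ h]; exact h|].
        intros x y [Ex _] [Ey _] E. apply Hg; auto. apply Hioi; auto; exact I.
      + intros x [Ex _]. apply ctbl_le_nat, Ex.
    - eapply card_le_trans; [apply (card_le_prod _ _ _ _ (card_le_refl (seg ltW (gam n))) (gam_inf n))|].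
      apply (hessenberg ltW (proj1 hW) (gam n) (gam_inf n)). }
  set (pick := fun n L => epsilon iA (fun z => ~ U n z /\ ~ In z L)).
  assert (Hpick : forall n L, ~ U n (pick n L) /\ ~ In (pick n L) L).
  { intros n L. exact (epsilon_spec iA _ (Hcov n L)). }
  set (Lst := fix Lst n := match n with 0 => nil | S n => Lst n ++ pick n (Lst n) :: nil end).
  set (y := fun n => pick n (Lst n)).
  assert (Hin : forall k n, k < n -> In (y k) (Lst n)).
  { intros k n H. induction H; simpl; apply in_or_app; [right; left; reflexivity|left; exact IHle]. }
  assert (Hyinj : forall a b, y a = y b -> a = b).
  { intros a b E. destruct (Nat.lt_trichotomy a b) as [h|[h|h]]; auto; exfalso.
    - apply (proj2 (Hpick b (Lst b))). fold (y b). rewrite <- E. apply Hin; auto.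
    - apply (proj2 (Hpick a (Lst a))). fold (y a). rewrite E. apply Hin; auto. }
  set (xs := fun z => exists n, y n = z).
  assert (Exs : Eset xs).
  { split; [|intros z _; exact I].
    exists y. split; [intros n _; exists n; auto|split].
    - intros a b _ _ E; apply Hyinj; auto.
    - intros z [n Hn]. exists n; split; auto; exact I. }
  destruct (cofinal (io (g xs)) (Hio _ I)) as [n Hn].
  apply (proj1 (Hpick n (Lst n))). exists xs. split; [split; auto|]. exists n; auto.
Qed.

End Konig.

Lemma konig : ~ card_le Eset (full A).
Proof.
  destruct A_seg as [k Hk].
  destruct (wf_min ltW wW_wf (fun k => card_le (full A) (seg ltW k)) k Hk) as [kap [H1 H2]].
  apply (konig_k kap H1 H2).
Qed.

Lemma or_le {T B} (X Y : pset T) : card_le X (full B) -> card_le Y (full B) ->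
  card_le (fun z => X z \/ Y z) (full (B * nat)).
Proof.
  intros [f [_ Hf]] [g [_ Hg]].
  exists (fun z => if excluded_middle_informative (X z) then (f z, 0) else (g z, 1)).
  split; [intros; exact I|].
  intros a b Ha Hb E.
  destruct (excluded_middle_informative (X a)) as [xa|xa];
  destruct (excluded_middle_informative (X b)) as [xb|xb];
  apply pair_equal_spec in E; destruct E as [E1 E2]; try discriminate.
  - apply Hf; auto.
  - apply Hg; auto; tauto.
Qed.

Section Main.
Context (F : pset A -> pset (pset A))
  (hF : forall x, ctbl_subsets (full A) x ->
          ctbl_inf (F x) /\ subset (F x) (ctbl_subsets (full A))).

Definition small (X : pset (pset A)) := card_le X (full O).

Lemma iPA : inhabited (pset A).
Proof. exact (inhabits (fun _ => True)). Qed.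

Lemma small_or X Y : small X -> small Y -> small (fun z => X z \/ Y z).
Proof.
  intros H1 H2. eapply card_le_trans; [apply (or_le _ _ H1 H2)|]. exact O_nat_O.
Qed.

Lemma small_union_nat (X : nat -> pset (pset A)) : (forall k, small (X k)) -> small (bigU (full nat) X).
Proof.
  intros H. eapply card_le_trans; [apply (union_le_gen (inhabits 0) iO (full nat) (full nat) X)|].
  - apply card_le_refl.
  - intros k _; apply H.
  - eapply card_le_trans; [apply card_le_sub, prod_full|]. exact nat_O_O.
Qed.

Lemma small_union (I : pset (pset A)) (X : pset A -> pset (pset A)) :
  small I -> (forall y, I y -> small (X y)) -> small (bigU I X).
Proof.
  intros H1 H2. eapply card_le_trans; [apply (union_le_gen iPA iO I (full O) X H1 H2)|].
  eapply card_le_trans; [apply card_le_sub, prod_full|]. exact O_O.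
Qed.

Definition Gy (y : pset A) : pset (pset A) := bigU (ctbl_subsets y) F.

Lemma E_of_ctbl x : ctbl_inf x -> Eset x.
Proof. intros H; split; auto. intros a _; exact I. Qed.

Lemma G_E y : subset (Gy y) Eset.
Proof.
  intros z [x [[Hx _] Hz]]. exact (proj2 (hF x (E_of_ctbl x Hx)) z Hz).
Qed.

Lemma G_small y : Eset y -> small (Gy y).
Proof.
  intros [[en [_ [Hen Hons]]] _].
  eapply card_le_trans; [apply (union_le_gen iPA (inhabits 0) (ctbl_subsets y) (full (pset nat)) F)|].
  - exists (fun x => fun n => x (en n)). split; [intros; exact I|].
    intros x x' [_ Hx] [_ Hx'] E. apply pset_ext. intros a. split; intros Ha.
    + destruct (Hons a (Hx a Ha)) as [n [_ <-]].
      change ((fun n => x' (en n)) n). rewrite <- E. exact Ha.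
    + destruct (Hons a (Hx' a Ha)) as [n [_ <-]].
      change ((fun n => x (en n)) n). rewrite E. exact Ha.
  - intros x [Hx _]. apply (card_eq_ge (inhabits 0)). apply (hF x (E_of_ctbl x Hx)).
  - eapply card_le_trans; [apply (card_le_prod _ _ _ _ PN_O nat_O)|].
    eapply card_le_trans; [apply card_le_sub, prod_full|]. exact O_O.
Qed.

Fixpoint Nk (N : pset (pset A)) (k : nat) : pset (pset A) :=
  match k with 0 => N | S k => fun z => Nk N k z \/ bigU (Nk N k) Gy z end.
Definition clos (N : pset (pset A)) : pset (pset A) := bigU (full nat) (Nk N).

Lemma clos_prop N : subset N Eset -> small N -> subset (clos N) Eset /\ small (clos N).
Proof.
  intros H1 H2.
  assert (Hk : forall k, subset (Nk N k) Eset /\ small (Nk N k)).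
  { induction k; simpl; auto. destruct IHk as [IH1 IH2]. split.
    - intros z [h|[y [Hy Hz]]]; auto. apply (G_E y z Hz).
    - apply small_or; auto. apply small_union; auto. intros y Hy. apply G_small, IH1, Hy. }
  split.
  - intros z [k [_ Hz]]. apply (proj1 (Hk k)), Hz.
  - apply small_union_nat. intros k; apply Hk.
Qed.

Lemma clos_sub N : subset N (clos N).
Proof. intros z Hz. exists 0. split; [exact I|exact Hz]. Qed.

Lemma clos_closed N y : clos N y -> subset (Gy y) (clos N).
Proof. intros [k [_ Hy]] z Hz. exists (S k). split; [exact I|]. simpl. right. exists y; auto. Qed.

Definition e0 : pset A -> W := epsilon (inhabits (fun _ : pset A => epsilon iW (fun _ => True)))
  (fun f => (forall x, full (pset A) x -> full W (f x)) /\
            (forall x y, full (pset A) x -> full (pset A) y -> f x = f y -> x = y)).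
Lemma e0_inj x y : e0 x = e0 y -> x = y.
Proof. intros E. exact (proj2 (epsilon_spec _ _ PA_W) x y I I E). Qed.

Definition Rset (Bef : pset (pset A)) : pset (pset A) := fun z => Eset z /\ ~ Bef z.
Definition mpick (Bef : pset (pset A)) : pset A :=
  epsilon iPA (fun z => Rset Bef z /\ forall z', ltW (e0 z') (e0 z) -> ~ Rset Bef z').
Definition ppick (Bef : pset (pset A)) : O -> pset A :=
  epsilon (inhabits (fun _ : O => fun _ : A => True))
   (fun f => (forall j, full O j -> Rset Bef (f j)) /\
             (forall i j, full O i -> full O j -> f i = f j -> i = j)).
Definition Nset (Bef : pset (pset A)) : pset (pset A) :=
  fun z => Eset z /\ (z = mpick Bef \/ exists j, ppick Bef j = z).
Definition Lset (Bef : pset (pset A)) : pset (pset A) :=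
  fun z => clos (Nset Bef) z /\ ~ Bef z.

Definition step (al : W) (prev : forall be, ltW be al -> pset (pset A)) : pset (pset A) :=
  Lset (fun z => exists be (h : ltW be al), prev be h z).

Definition Level : W -> pset (pset A) := Fix wW_wf (fun _ => pset (pset A)) step.
Definition Before (al : W) : pset (pset A) := fun z => exists be, ltW be al /\ Level be z.

Lemma Level_eq al : Level al = Lset (Before al).
Proof.
  assert (ext : forall (x : W) (g h : forall y : W, ltW y x -> pset (pset A)),
        (forall (y : W) (p : ltW y x), g y p = h y p) -> step x g = step x h).
  { intros x g h Hgh. assert (g = h) as ->; [|reflexivity].
    apply functional_extensionality_dep; intros y.
    apply functional_extensionality_dep; intros p. apply Hgh. }
  unfold Level. rewrite (Fix_eq wW_wf (fun _ => pset (pset A)) step ext al).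
  unfold step. f_equal. apply pset_ext. intros z. unfold Before. split.
  - intros [be [h H]]. exists be; auto.
  - intros [be [h H]]. exists be, h; auto.
Qed.

Lemma Nset_small Bef : small (Nset Bef).
Proof.
  eapply card_le_trans; [apply (card_le_sub _ (fun z => (fun z => z = mpick Bef) z \/ (fun z => exists j, ppick Bef j = z) z))|].
  { intros z [_ H]; exact H. }
  apply small_or.
  - destruct iO as [o]. exists (fun _ => o). split; [intros; exact I|]. intros x y Hx Hy _. congruence.
  - apply (card_le_onto iO (full O) _ (ppick Bef)). intros z [j Hj]. exists j; split; auto; exact I.
Qed.

Lemma Level_small_E al : small (Level al) /\ subset (Level al) Eset.
Proof.
  rewrite Level_eq. destruct (clos_prop (Nset (Before al))) as [H1 H2].
  - intros z [h _]; exact h.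
  - apply Nset_small.
  - split.
    + eapply card_le_trans; [|exact H2]. apply card_le_sub. intros z [h _]; exact h.
    + intros z [h _]. apply H1, h.
Qed.

Lemma Before_le al : card_le (Before al) (full A).
Proof.
  eapply card_le_trans; [apply (union_le_gen iW iO (seg ltW al) (full A) Level)|].
  - apply (proj2 (proj2 hW)).
  - intros be _. apply Level_small_E.
  - eapply card_le_trans; [apply card_le_sub, prod_full|]. exact A_O_A.
Qed.

Lemma Rest_unc al : ~ countable (Rset (Before al)).
Proof.
  intros H. apply konig.
  eapply card_le_trans; [apply (card_le_sub _ (fun z => Before al z \/ Rset (Before al) z))|].
  { intros z Hz. destruct (classic (Before al z)); [left; auto|right; split; auto]. }
  eapply card_le_trans; [apply (or_le _ _ (Before_le al))|].
  { eapply card_le_trans; [exact H|]. exact (nat_A). }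
  eapply card_le_trans; [apply card_le_sub, full_prod|].
  eapply card_le_trans; [apply (card_le_prod _ _ _ _ (card_le_refl (full A)) nat_A)|].
  eapply card_le_trans; [apply card_le_sub, prod_full|]. exact A_A.
Qed.

Lemma ppick_spec al : (forall j, Rset (Before al) (ppick (Before al) j)) /\
   (forall i j, ppick (Before al) i = ppick (Before al) j -> i = j).
Proof.
  assert (Hex : card_le (full O) (Rset (Before al))).
  { destruct (K1full ltO wO_wf wO_tri iPA (full nat) (proj2 (proj2 hO)) (Rset (Before al))) as [H|H]; auto.
    exfalso. exact (Rest_unc al H). }
  pose proof (epsilon_spec (inhabits (fun _ : O => fun _ : A => True)) _ Hex) as [H1 H2]. fold (ppick (Before al)) in H1, H2.
  split; [intros j; apply H1; exact I|intros i j E; apply H2; auto; exact I].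
Qed.

Lemma mpick_spec al : Rset (Before al) (mpick (Before al)) /\
  forall z', ltW (e0 z') (e0 (mpick (Before al))) -> ~ Rset (Before al) z'.
Proof.
  unfold mpick at 1 2.
  apply (epsilon_spec iPA (fun z => Rset (Before al) z /\ forall z', ltW (e0 z') (e0 z) -> ~ Rset (Before al) z')).
  pose proof (proj1 (ppick_spec al) (epsilon iO (fun _ => True))) as Hr.
  destruct (wf_min (fun z z' => ltW (e0 z) (e0 z')) (wf_inverse_image _ _ _ e0 wW_wf) _ _ Hr) as [m [Hm1 Hm2]].
  exists m. split; auto.
Qed.

Lemma O_Level al : card_le (full O) (Level al).
Proof.
  rewrite Level_eq. destruct (ppick_spec al) as [H1 H2].
  exists (ppick (Before al)). split.
  - intros j _. split.
    + apply clos_sub. split; [apply (H1 j)|right; exists j; auto].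
    + apply (H1 j).
  - intros i j _ _ E; apply H2; auto.
Qed.

Lemma Level_eqO al : card_eq (full O) (Level al).
Proof. apply (sb iPA); [apply O_Level|apply Level_small_E]. Qed.

Lemma Level_disj be al z : ltW be al -> Level be z -> Level al z -> False.
Proof. intros H1 H2 H3. rewrite Level_eq in H3. apply (proj2 H3). exists be; auto. Qed.

Lemma Level_closed al y : Level al y -> forall z, Gy y z -> Before al z \/ Level al z.
Proof.
  intros Hy z Hz. rewrite Level_eq in Hy |- *. destruct Hy as [Hy _].
  destruct (classic (Before al z)); [left; auto|right; split; auto].
  apply (clos_closed _ y Hy z Hz).
Qed.

Lemma m_in al : Level al (mpick (Before al)).
Proof.
  rewrite Level_eq. destruct (mpick_spec al) as [[H1 H2] _]. split; auto.
  apply clos_sub. split; auto.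
Qed.

Lemma exhaust x : Eset x -> exists al, Level al x.
Proof.
  intros Ex. apply NNPP; intros N.
  assert (Rx : forall al, Rset (Before al) x).
  { intros al. split; auto. intros [be [_ H]]. apply N; eauto. }
  set (phi := fun al => e0 (mpick (Before al))).
  assert (Hlt : forall al, ltW (phi al) (e0 x)).
  { intros al. destruct (mpick_spec al) as [_ H2].
    destruct (wW_tri (phi al) (e0 x)) as [h|[h|h]]; auto; exfalso.
    - apply e0_inj in h. apply N. exists al. rewrite <- h. apply m_in.
    - exact (H2 x h (Rx al)). }
  assert (Hmono : forall be al, ltW be al -> ltW (phi be) (phi al)).
  { intros be al Hba. destruct (mpick_spec be) as [_ H2]. destruct (mpick_spec al) as [[Ea Na] _].
    destruct (wW_tri (phi be) (phi al)) as [h|[h|h]]; auto; exfalso.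
    - apply e0_inj in h. apply Na. exists be. split; auto. rewrite <- h. apply m_in.
    - apply (H2 _ h). split; auto. intros [g [Hg Hl]]. apply Na. exists g. split; auto.
      eapply trW; eauto. }
  assert (Hge : forall al, ~ ltW (phi al) al).
  { intros al. induction al as [al IH] using (well_founded_ind wW_wf). intros H.
    apply (IH _ H). apply Hmono, H. }
  apply (Hge (e0 x)). apply Hlt.
Qed.

Lemma main_core : exists a : W -> O -> pset A,
    (forall al j be i, a al j = a be i -> al = be /\ j = i) /\
    (forall x, ctbl_subsets (full A) x <-> exists al j, a al j = x) /\
    (forall al j x, ctbl_subsets (a al j) x ->
       forall y, F x y ->
         exists eta i, (ltW eta al \/ eta = al) /\ y = a eta i).
Proof.
  set (bij := fun al => epsilon (inhabits (fun _ : O => fun _ : A => True))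
     (fun f => (forall x, full O x -> Level al (f x)) /\
               (forall x y, full O x -> full O y -> f x = f y -> x = y) /\
               (forall y, Level al y -> exists x, full O x /\ f x = y))).
  assert (Hb : forall al, (forall x, full O x -> Level al (bij al x)) /\
               (forall x y, full O x -> full O y -> bij al x = bij al y -> x = y) /\
               (forall y, Level al y -> exists x, full O x /\ bij al x = y)).
  { intros al. exact (epsilon_spec _ _ (Level_eqO al)). }
  exists bij. split; [|split].
  - intros al j be i E.
    pose proof (proj1 (Hb al) j I) as L1. pose proof (proj1 (Hb be) i I) as L2.
    rewrite E in L1.
    destruct (wW_tri al be) as [h|[h|h]].
    + exfalso. exact (Level_disj _ _ _ h L1 L2).
    + subst be. split; auto. apply (proj1 (proj2 (Hb al))); auto; exact I.
    + exfalso. exact (Level_disj _ _ _ h L2 L1).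
  - intros x. split.
    + intros Ex. destruct (exhaust x Ex) as [al Hal].
      destruct (proj2 (proj2 (Hb al)) x Hal) as [j [_ Hj]]. exists al, j; auto.
    + intros [al [j <-]]. apply (proj2 (Level_small_E al)). apply (proj1 (Hb al)). exact I.
  - intros al j x Hx y Hy.
    assert (HG : Gy (bij al j) y) by (exists x; auto).
    destruct (Level_closed al (bij al j) (proj1 (Hb al) j I) y HG) as [[be [Hbe Hl]]|Hl].
    + destruct (proj2 (proj2 (Hb be)) y Hl) as [i [_ Hi]]. exists be, i. auto.
    + destruct (proj2 (proj2 (Hb al)) y Hl) as [i [_ Hi]]. exists al, i. auto.
Qed.

End Main.

End Ctx.



Theorem lemma8 (hGCH : GCH)
  (A : Type) (hA : is_aleph_omega A)
  (W : Type) (ltW : W -> W -> Prop) (hW : is_succ_card_order ltW A)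
  (O : Type) (ltO : O -> O -> Prop) (hO : is_omega1 ltO)
  (F : pset A -> pset (pset A))
  (hF : forall x, ctbl_subsets (full A) x ->
          ctbl_inf (F x) /\ subset (F x) (ctbl_subsets (full A))) :
  exists a : W -> O -> pset A,
    (forall al j be i, a al j = a be i -> al = be /\ j = i) /\
    (forall x, ctbl_subsets (full A) x <-> exists al j, a al j = x) /\
    (forall al j x, ctbl_subsets (a al j) x ->
       forall y, F x y ->
         exists eta i, (ltW eta al \/ eta = al) /\ y = a eta i).
Proof.
  exact (main_core hGCH A hA W ltW hW O ltO hO F hF).
Qed.
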